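(* Let $\mathfrak{R}$ be either $\mathbb{F}_q$ ($q$ a prime power) or $\mathbb{Z}_k$ ($k\ge 2$), with character $\chi$ as in the context. Let $C$ be an $\mathfrak{R}$-linear code of length $n$ and $\bm{w}\in\mathfrak{R}^n$. Then \[ Jac^{av}(C^{\perp},\bm{w}; x_{a} : a \in \mathfrak{R}^{2})=\frac{1}{|C|}\,Jac^{av}\Big(C,\bm{w};\ \sum_{b\in\mathfrak{R}}\chi(a_1 b)\,x_{(b,a_2)} : a=(a_1,a_2)\in\mathfrak{R}^{2}\Big), \] where the right-hand side is $Jac^{av}(C,\bm{w};x_a:a\in\mathfrak{R}^2)$ with each $x_{(a_1,a_2)}$ replaced by $\sum_{b}\chi(a_1b)x_{(b,a_2)}$.
   Context: An $\mathbb{F}_q$-linear code of length $n$ is a subspace of $\mathbb{F}_q^n$; a $\mathbb{Z}_k$-linear code is an additive subgroup of $\mathbb{Z}_k^n$. $C^\perp=\{\bm{v}\in\mathfrak{R}^n : \sum_i u_iv_i=0\ \forall \bm{u}\in C\}$. The character $\chi$: if $\mathfrak{R}=\mathbb{F}_q$, $q=p^f$, fix a root $\lambda$ of a primitive irreducible polynomial of degree $f$ over $\mathbb{F}_p$, write $\alpha=\alpha_0+\alpha_1\lambda+\cdots+\alpha_{f-1}\lambda^{f-1}$ ($\alpha_i\in\mathbb{F}_p$) and set $\chi(\alpha)=\zeta_p^{\alpha_0}$; if $\mathfrak{R}=\mathbb{Z}_k$, $\chi(\alpha)=\zeta_k^{\alpha}$ ($\zeta_m$ a primitive $m$-th root of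 unity). For $a\in\mathfrak{R}^2$, $r_a(\bm{u};\bm{w})=\#\{i:(u_i,w_i)=a\}$, and $Jac(C,\bm{w};x_a:a\in\mathfrak{R}^2)=\sum_{\bm{u}\in C}\prod_{a\in\mathfrak{R}^2}x_a^{r_a(\bm{u};\bm{w})}$. For $\sigma\in S_n$ and $\bm{u}\in\mathfrak{R}^n$, $\bm{u}^\sigma=(u_{\sigma(1)},\dots,u_{\sigma(n)})$ and $C^\sigma=\{\bm{u}^\sigma:\bm{u}\in C\}$. The average Jacobi polynomial is $Jac^{av}(C,\bm{w};x_a:a\in\mathfrak{R}^2)=\frac{1}{n!}\sum_{\sigma\in S_n}Jac(C^\sigma,\bm{w};x_a:a\in\mathfrak{R}^2)$. *)

(* Defs.v *)
From HB Require Import structures.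
From mathcomp Require Import all_boot all_order all_algebra all_fingroup all_field.
From mathcomp Require Import mpoly.

Set Implicit Arguments.
Unset Strict Implicit.
Unset Printing Implicit Defensive.

Import GRing.Theory.
Local Open Scope ring_scope.

Section Jacobi.
Variables (R : finComNzRingType) (n : nat).

(* Linear codes: F_q-linear = subspace, Z_k-linear = additive subgroup. *)
Definition additive_code (C : {set 'rV[R]_n}) : bool :=
  (0 \in C) && [forall u in C, forall v in C, u - v \in C].

Definition subspace_code (C : {set 'rV[R]_n}) : bool :=
  additive_code C && [forall a : R, forall u in C, a *: u \in C].

Definition dual_code (C : {set 'rV[R]_n}) : {set 'rV[R]_n} :=
  [set v : 'rV[R]_n | [forall u in C, \sum_(i < n) u ord0 i * v ord0 i == 0]].

Definition r_count (a : R * R) (u w : 'rV[R]_n) : nat :=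
  #|[set i : 'I_n | (u ord0 i, w ord0 i) == a]|.

Definition perm_vec (s : 'S_n) (u : 'rV[R]_n) : 'rV[R]_n :=
  \row_(i < n) u ord0 (s i).
Definition perm_code (C : {set 'rV[R]_n}) (s : 'S_n) : {set 'rV[R]_n} :=
  [set perm_vec s u | u in C].

Definition NV := #|{: R * R}|.
Notation Pol := {mpoly algC[NV]}.

Definition xvar (a : R * R) : Pol := 'X_(enum_rank a).

(* Jac(C, w; y_a : a in R^2) for an arbitrary family y of polynomials
   (y = xvar gives the Jacobi polynomial; other y give substitutions). *)
Definition Jac (C : {set 'rV[R]_n}) (w : 'rV[R]_n) (y : R * R -> Pol) : Pol :=
  \sum_(u in C) \prod_(a : R * R) y a ^+ r_count a u w.

Definition JacAv (C : {set 'rV[R]_n}) (w : 'rV[R]_n) (y : R * R -> Pol) : Pol :=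
  (n`!%:R)^-1 *: \sum_(s : 'S_n) Jac (perm_code C s) w y.

Definition xsubst (chi : R -> algC) (a : R * R) : Pol :=
  \sum_(b : R) chi (a.1 * b) *: xvar (b, a.2).

End Jacobi.

Definition is_primitive_poly (p f : nat) (P : {poly 'F_p}) : Prop :=
  irreducible_poly P /\ size P = f.+1 /\
  P %| 'X^(p ^ f - 1) - 1 /\
  (forall e : nat, (0 < e)%N -> (e < p ^ f - 1)%N -> ~~ (P %| 'X^e - 1)).

(* alpha_0 : the constant coordinate of alpha in the basis 1, lam, ..., lam^(f-1)
   over F_p (elements of F_p are represented by nat's < p cast into F). *)
Definition coord0 (F : finFieldType) (p f : nat) (lam : F) (alpha : F) : nat :=
  match [pick t : f.-tuple 'I_p |
           alpha == \sum_(i < f) (nat_of_ord (tnth t i))%:R * lam ^+ i] with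
  | Some t => nth 0%N [seq nat_of_ord i | i <- t] 0
  | None => 0%N
  end.

Definition chiF (F : finFieldType) (p f : nat) (lam : F) (zeta : algC)
  (alpha : F) : algC := zeta ^+ coord0 p f lam alpha.

Definition chiZ (k : nat) (zeta : algC) (alpha : 'Z_k) : algC :=
  zeta ^+ (nat_of_ord alpha).

(* Main.v *)
Require Import Defs.
From HB Require Import structures.
From mathcomp Require Import all_boot all_order all_algebra all_fingroup all_field.
From mathcomp Require Import mpoly.
Import GRing.Theory Num.Theory.
Local Open Scope ring_scope.
Set Implicit Arguments.
Unset Strict Implicit.
Unset Printing Implicit Defensive.

Section Generic.
Variables (R : finComNzRingType) (n : nat).
Local Notation Pol := {mpoly algC[NV R]}.

Definition dot (u v : 'rV[R]_n) : R := \sum_(i < n) u ord0 i * v ord0 i.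

Lemma prod_count (y : R * R -> Pol) (u w : 'rV[R]_n) :
  \prod_(a : R * R) y a ^+ r_count a u w = \prod_(i < n) y (u ord0 i, w ord0 i).
Proof.
rewrite (partition_big (fun i => (u ord0 i, w ord0 i)) predT) //=.
apply: eq_bigr => a _.
rewrite (eq_bigr (fun _ => y a)); last by move=> i /eqP ->.
rewrite prodr_const /r_count; congr (_ ^+ _).
by apply: eq_card => i; rewrite inE.
Qed.

Lemma dotDl u1 u2 v : dot (u1 + u2) v = dot u1 v + dot u2 v.
Proof. by rewrite /dot -big_split; apply: eq_bigr => i _; rewrite mxE mulrDl. Qed.

Variable chi : R -> algC.
Hypothesis chiD : forall a b, chi (a + b) = chi a * chi b.
Hypothesis chi0 : chi 0 = 1.

Lemma addC_closed (C : {set 'rV[R]_n}) u v :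
  additive_code C -> u \in C -> v \in C -> u + v \in C.
Proof.
case/andP=> C0 /forall_inP H uC vC.
have : 0 - v \in C by move/forall_inP: (H 0 C0); apply.
rewrite sub0r => vN; have := (forall_inP (H u uC)) _ vN.
by rewrite opprK.
Qed.

Lemma char_sum (C : {set 'rV[R]_n}) v :
  additive_code C ->
  (v \notin dual_code C -> exists2 u, u \in C & chi (dot u v) != 1) ->
  \sum_(u in C) chi (dot u v) = if v \in dual_code C then (#|C|%:R) else 0.
Proof.
move=> aC Hnt; case: ifPn => vd.
  rewrite (eq_bigr (fun _ => 1)) ?sumr_const //.
  move=> u uC; move: vd; rewrite inE => /forall_inP /(_ u uC) /eqP.
  by rewrite /dot => ->.
have [u0 u0C c1] := Hnt vd.
set S := \sum_(u in C) _.
have eqS : S = chi (dot u0 v) * S.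
  have img : [set u + u0 | u in C] = C.
    apply/eqP; rewrite eqEcard card_imset; last exact: addIr.
    rewrite leqnn andbT; apply/subsetP => x /imsetP [u uC ->].
    exact: addC_closed.
  rewrite /S -{1}img big_imset /=; last by move=> x y _ _; apply: addIr.
  rewrite mulr_sumr; apply: eq_bigr => u _.
  by rewrite dotDl chiD mulrC.
apply/eqP; move: eqS => /eqP; rewrite -subr_eq0 -{1}[S]mul1r -mulrBl mulf_eq0.
by rewrite subr_eq0 eq_sym (negbTE c1).
Qed.


Definition Xv (w v : 'rV[R]_n) : Pol := \prod_(i < n) xvar (v ord0 i, w ord0 i).

Lemma xsubst_expand (u w : 'rV[R]_n) :
  \prod_(i < n) xsubst chi (u ord0 i, w ord0 i) =
  \sum_(v : 'rV[R]_n) chi (dot u v) *: Xv w v.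
Proof.
rewrite /xsubst /= bigA_distr_bigA /=.
rewrite (reindex (fun v : 'rV[R]_n => [ffun i => v ord0 i])) /=; last first.
  exists (fun g : {ffun 'I_n -> R} => \row_i g i) => [v _|g _].
    by apply/rowP => i; rewrite !mxE ffunE.
  by apply/ffunP => i; rewrite ffunE mxE.
apply: eq_bigr => v _; rewrite scaler_prod /dot.
rewrite (big_morph chi chiD chi0) /Xv; congr (_ *: _).
  by apply: eq_bigr => i _; rewrite ffunE.
by apply: eq_bigr => i _; rewrite ffunE.
Qed.

Lemma macW (C : {set 'rV[R]_n}) (w : 'rV[R]_n) :
  additive_code C ->
  (forall v, v \notin dual_code C -> exists2 u, u \in C & chi (dot u v) != 1) ->
  Jac (dual_code C) w (@xvar R) = (#|C|%:R)^-1 *: Jac C w (xsubst chi).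
Proof.
move=> aC Hnt; rewrite /Jac.
transitivity ((#|C|%:R)^-1 *: \sum_(u in C) \sum_(v : 'rV[R]_n) chi (dot u v) *: Xv w v); last first.
  by congr (_ *: _); apply: eq_bigr => u _; rewrite prod_count xsubst_expand.
rewrite exchange_big /=.
rewrite [in RHS](eq_bigr (fun v => if v \in dual_code C then #|C|%:R *: Xv w v else 0)); last first.
  by move=> v _; rewrite -scaler_suml (char_sum aC (Hnt v)); case: ifP; rewrite ?scale0r.
rewrite -big_mkcond /= scaler_sumr; apply: eq_bigr => v _.
rewrite scalerA mulVf ?scale1r ?prod_count //.
rewrite pnatr_eq0 -lt0n card_gt0 // ; apply/set0Pn; exists 0.
by case/andP: aC.
Qed.

Lemma perm_vecK (s : 'S_n) : cancel (@perm_vec R n s) (perm_vec s^-1).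
Proof. by move=> u; apply/rowP => i; rewrite !mxE permKV. Qed.

Lemma Jac_perm (C : {set 'rV[R]_n}) s w (y : R * R -> Pol) :
  Jac (perm_code C s) w y = Jac C (perm_vec s^-1 w) y.
Proof.
rewrite /Jac /perm_code big_imset /=; last first.
  by move=> u v _ _; apply: (can_inj (perm_vecK s)).
apply: eq_bigr => u _; rewrite !prod_count.
rewrite [RHS](reindex_inj (@perm_inj _ s)) /=.
by apply: eq_bigr => i _; rewrite !mxE permK.
Qed.

Lemma macW_av (C : {set 'rV[R]_n}) (w : 'rV[R]_n) :
  additive_code C ->
  (forall v, v \notin dual_code C -> exists2 u, u \in C & chi (dot u v) != 1) ->
  JacAv (dual_code C) w (@xvar R) = (#|C|%:R)^-1 *: JacAv C w (xsubst chi).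
Proof.
move=> aC Hnt; rewrite /JacAv scalerA mulrC -scalerA; congr (_ *: _).
rewrite scaler_sumr; apply: eq_bigr => s _.
by rewrite !Jac_perm macW.
Qed.
End Generic.

Unset Implicit Arguments.
Lemma caseZ (k : nat) (zeta : algC) (n : nat) (C : {set 'rV['Z_k]_n}) (w : 'rV['Z_k]_n) :
      (1 < k)%N ->
      k.-primitive_root zeta ->
      additive_code C ->
      JacAv (dual_code C) w (@xvar _) =
      (#|C|%:R)^-1 *: JacAv C w (xsubst (@chiZ k zeta)).
Proof.
move=> hk pz aC; have pz' := pz; rewrite -(Zp_cast hk) in pz'; apply: macW_av => //.
- move=> a b; by rewrite /chiZ -exprD -(prim_expr_mod pz' (_ + _)%N).
move=> v; rewrite inE => /forall_inP; case: (boolP [forall u in C, dot u v == 0]).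
  by move/forall_inP.
rewrite negb_forall_in => /existsP [u /andP [uC nz]] _; exists u => //.
rewrite /chiZ -[X in _ != X](expr0 zeta) (eq_prim_root_expr pz) mod0n.
have lt : (nat_of_ord (dot u v) < k)%N by rewrite -[X in (_ < X)%N](Zp_cast hk) ltn_ord.
rewrite modn_small //; apply: contra nz => /eqP h.
Qed.
Section Phi.
Variables (F : finFieldType) (p : nat).
Hypothesis chF : p \in [pchar F].

Let pr : prime p := pcharf_prime chF.

Definition phiF (chF' : p \in [pchar F]) (c : 'F_p) : F := (nat_of_ord c)%:R.
Local Notation phi := (phiF chF).

Lemma natF_mod m : (m %% p)%:R = m%:R :> F.
Proof.
by rewrite {2}(divn_eq m p) natrD natrM (pcharf0 chF) mulr0 add0r.
Qed.

Lemma phi_nat m : phi (m%:R) = m%:R.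
Proof. by rewrite /phi (val_Fp_nat pr) natF_mod. Qed.

Lemma phiD : {morph phi : a b / a + b}.
Proof.
by move=> a b; rewrite -[a]natr_Zp -[b]natr_Zp -natrD !phi_nat natrD.
Qed.

Lemma phiM : {morph phi : a b / a * b}.
Proof.
by move=> a b; rewrite -[a]natr_Zp -[b]natr_Zp -natrM !phi_nat natrM.
Qed.

Lemma phi0 : phi 0 = 0.
Proof. by rewrite -(mulr0n 1) phi_nat. Qed.

Lemma phi1 : phi 1 = 1.
Proof. by rewrite -(mulr1n 1) phi_nat. Qed.

HB.instance Definition _ := GRing.isNmodMorphism.Build 'F_p F (@phiF chF) (phi0, phiD).
HB.instance Definition _ := GRing.isMonoidMorphism.Build 'F_p F (@phiF chF) (phi1, phiM).

End Phi.

Section Rep.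
Variables (F : finFieldType) (p f : nat) (lam : F) (zeta : algC).
Hypothesis chF : p \in [pchar F].
Hypothesis cardF : #|F| = (p ^ f)%N.
Variable P : {poly 'F_p}.
Hypothesis irrP : irreducible_poly P.
Hypothesis sizeP : size P = f.+1.
Hypothesis lamroot : root (map_poly (@phiF F p chF) P) lam.
Hypothesis pz : p.-primitive_root zeta.

Let pr : prime p := pcharf_prime chF.

Definition rep (t : f.-tuple 'I_p) : F :=
  \sum_(i < f) (nat_of_ord (tnth t i))%:R * lam ^+ i.

Lemma coprimePQ {Q : {poly 'F_p}} : Q != 0 -> (size Q <= f)%N -> coprimep P Q.
Proof.
move=> Q0 sQ; rewrite coprimep_def; apply/negPn/negP => hg.
have := irrP.2 _ hg (dvdp_gcdl P Q).
move=> /eqp_dvdl eqd.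
have : P %| Q by rewrite -eqd dvdp_gcdr.
move=> /(dvdp_leq Q0); rewrite sizeP => h.
by have := leq_trans h sQ; rewrite ltnn.
Qed.

Lemma root_coprime {Q : {poly 'F_p}} : Q != 0 -> (size Q <= f)%N ->
  (map_poly (@phiF F p chF) Q).[lam] != 0.
Proof.
move=> Q0 sQ; have /Bezout_coprimepP [[u1 u2] /= he] := coprimePQ Q0 sQ.
have /size_poly1P [c c0 hc] : size (u1 * P + u2 * Q) == 1%N.
  by rewrite (eqp_size he) size_poly1.
apply/negP => /eqP hQ.
have := congr1 (fun q => (map_poly (@phiF F p chF) q).[lam]) hc => /=.
rewrite rmorphD !rmorphM /= hornerD !hornerM hQ.
rewrite (eqP lamroot) !mulr0 addr0 map_polyC hornerC => /esym/eqP.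
by rewrite fmorph_eq0 (negbTE c0).
Qed.


Lemma rep_inj : injective rep.
Proof.
move=> t s hts.
pose c (i : 'I_f) : 'F_p := (nat_of_ord (tnth t i))%:R - (nat_of_ord (tnth s i))%:R.
pose Q : {poly 'F_p} := \poly_(j < f) \sum_(i < f | val i == j) c i.
have Qc (i : 'I_f) : Q`_i = c i.
  by rewrite coef_poly ltn_ord (big_pred1 i).
have sQ : (size Q <= f)%N by apply: size_poly.
have ev : (map_poly (@phiF F p chF) Q).[lam] = rep t - rep s.
  rewrite (@horner_coef_wide _ f); last by rewrite size_map_poly.
  rewrite /rep -sumrB; apply: eq_bigr => i _.
  by rewrite coef_map Qc /c raddfB /= !phi_nat mulrBl.
have Q0 : Q = 0.
  apply/eqP; apply: contraT => nQ.
  by have := root_coprime nQ sQ; rewrite ev hts subrr eqxx.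
apply: eq_from_tnth => i; apply: val_inj.
have /eqP := Qc i; rewrite Q0 coef0 eq_sym subr_eq0 => /eqP /(congr1 val).
by rewrite /= !(val_Fp_nat pr) !modn_small.
Qed.

Lemma rep_onto (a : F) : exists t, a = rep t.
Proof.
have : a \in codom rep.
  by apply: (inj_card_onto rep_inj); rewrite card_tuple card_ord cardF.
by case/codomP => t ->; exists t.
Qed.

Lemma coord0_rep t : Defs.coord0 p f lam (rep t) = nth 0%N [seq nat_of_ord i | i <- t] 0.
Proof.
rewrite /Defs.coord0; case: pickP => [t' /eqP h | none].
  by rewrite (rep_inj _ _ h).
by have := none t; rewrite eqxx.
Qed.


Lemma f_gt0 : (0 < f)%N.
Proof.
have := finNzRing_gt1 F; rewrite cardF; case: (f) => // ; by rewrite expn0.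
Qed.

Let i0 : 'I_f := Ordinal f_gt0.

Lemma chiF_rep t : chiF p f lam zeta (rep t) = zeta ^+ tnth t i0.
Proof.
rewrite /chiF coord0_rep (nth_map (tnth t i0)) ?size_tuple ?f_gt0 //.
by rewrite [in RHS](tnth_nth (tnth t i0)). 
Qed.

Lemma chiF_D a b : chiF p f lam zeta (a + b) = chiF p f lam zeta a * chiF p f lam zeta b.
Proof.
have [t ->] := rep_onto a; have [s ->] := rep_onto b.
have p0 := prime_gt0 pr.
pose ts := [tuple Ordinal (ltn_pmod (tnth t i + tnth s i) p0) | i < f].
have -> : rep t + rep s = rep ts.
  rewrite /rep -big_split; apply: eq_bigr => i _.
  by rewrite tnth_mktuple /= natF_mod // natrD mulrDl.
by rewrite !chiF_rep tnth_mktuple /= (prim_expr_mod pz) exprD.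
Qed.

Lemma chiF_0 : chiF p f lam zeta 0 = 1.
Proof.
have h := chiF_D 0 0; rewrite addr0 in h.
have nz : chiF p f lam zeta 0 != 0.
  rewrite /chiF expf_neq0 //; apply/negP => /eqP z0.
  have := prim_expr_order pz; rewrite z0 expr0n (gtn_eqF (prime_gt0 pr)) /= => /eqP.
  by rewrite eq_sym oner_eq0.
by apply: (mulfI nz); rewrite mulr1 -h.
Qed.

Lemma chiF_nt : exists e, chiF p f lam zeta e != 1.
Proof.
pose t1 := [tuple (if val i == 0%N then Ordinal (prime_gt1 pr) else Ordinal (prime_gt0 pr)) | i < f].
exists (rep t1); rewrite chiF_rep tnth_mktuple /= expr1.
apply/eqP => z1; have := prim_order_gt0 pz.
have := prim_expr_order pz; rewrite z1 expr1n.
have := pz; rewrite z1 => /prim_order_dvd/(_ 1%N); rewrite expr1n eqxx dvdn1.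
by move=> /eqP p1; have := prime_gt1 pr; rewrite p1.
Qed.


Lemma caseF_gen (n : nat) (C : {set 'rV[F]_n}) (w : 'rV[F]_n) :
  subspace_code C ->
  JacAv (dual_code C) w (@xvar F) =
  (#|C|%:R)^-1 *: JacAv C w (xsubst (@chiF F p f lam zeta)).
Proof.
case/andP=> aC /forallP sC; apply: macW_av => //.
- exact: chiF_D.
- exact: chiF_0.
move=> v; rewrite inE negb_forall_in => /existsP [u1 /andP [u1C nz]].
have [e he] := chiF_nt.
exists ((e / dot u1 v) *: u1).
  by move/forall_inP: (sC (e / dot u1 v)); apply.
suff -> : dot ((e / dot u1 v) *: u1) v = e by [].
rewrite {1}/dot (eq_bigr (fun i => e / dot u1 v * (u1 ord0 i * v ord0 i))).
  by rewrite -mulr_sumr -/(dot u1 v) divfK.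
by move=> i _; rewrite mxE mulrA.
Qed.

End Rep.

Theorem mainTheorem4 :
  (* Case R = F_q, q = p^f *)
  (forall (F : finFieldType) (p f : nat) (lam : F) (zeta : algC)
          (n : nat) (C : {set 'rV[F]_n}) (w : 'rV[F]_n),
      prime p -> p \in [pchar F] -> #|F| = (p ^ f)%N ->
      (exists P : {poly 'F_p}, @is_primitive_poly p f P /\
         root (map_poly (fun c : 'F_p => (nat_of_ord c)%:R : F) P) lam) ->
      p.-primitive_root zeta ->
      subspace_code C ->
      JacAv (dual_code C) w (@xvar F) =
      (#|C|%:R)^-1 *: JacAv C w (xsubst (@chiF F p f lam zeta)))
  /\
  (* Case R = Z_k, k >= 2 *)
  (forall (k : nat) (zeta : algC) (n : nat) (C : {set 'rV['Z_k]_n}) (w : 'rV['Z_k]_n),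
      (1 < k)%N ->
      k.-primitive_root zeta ->
      additive_code C ->
      JacAv (dual_code C) w (@xvar _) =
      (#|C|%:R)^-1 *: JacAv C w (xsubst (@chiZ k zeta))).
Proof.
split.
  move=> F p f lam zeta n C w pr chF cardF [P [[irrP [sizeP _]] lroot]] pz sC.
  exact: (@caseF_gen F p f lam zeta chF cardF P irrP sizeP lroot pz n C w sC).
move=> k zeta n C w hk pz aC.
exact: caseZ.
Qed.
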